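(* Let $p$ be a prime, $X$ a countable set, and let $K,L\subseteq\mathbb{Q}_p(X)$ be $\tau$-closed sub-$\mathbb{Z}_p$-modules. Then: (a) $K=K^{\perp\perp}$; (b) if $K\subseteq L$ then $L^\perp\subseteq K^\perp$; (c) $(K+L)^\perp=K^\perp\cap L^\perp$; (d) $(K\cap L)^\perp$ equals the $\tau$-closure of $K^\perp+L^\perp$.
   Context: $\mathbb{Q}_p(X)$ is the set of maps $\xi:X\to\mathbb{Q}_p$ with $|\xi(i)|_p\le1$ for all but finitely many $i$, a $\mathbb{Z}_p$-module under coordinatewise operations, with the topology $\tau$ in which $A\subseteq\mathbb{Q}_p(X)$ is open iff for every finite $P\subseteq X$ the set $A\cap\big(\prod_{i\in P}\mathbb{Q}_p\times\prod_{j\in X\setminus P}\mathbb{Z}_p\big)$ is open in the product topology. The pairing is $\langle\xi,\eta\rangle=\iota\big(\sum_{i\in X}(\xi(i)\eta(i)+\mathbb{Z}_p)\big)\in S^1$, where $\iota:\mathbb{Q}_p/\mathbb{Z}_p\cong\mathbb{Z}[1/p]/\mathbb{Z}\hookrightarrow\mathbb{R}/\mathbb{Z}\cong S^1$ is the canonical embedding. For $K\subseteq\mathbb{Q}_p(X)$, $K^\perp=\{\xi\in\mathbb{Q}_p(X):\langle\xi,\eta\rangle=1\ \forall\eta\in K\}$ (the neutral element of $S^1$; written $0$ when $S^1\cong\mathbb{R}/\mathbb{Z}$). *)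

(* Defs.v *)
From HB Require Import structures.
From mathcomp Require Import all_boot all_order all_algebra.
From mathcomp Require Import boolp classical_sets functions cardinality fsbigop.
Set Implicit Arguments. Unset Strict Implicit. Unset Printing Implicit Defensive.
Import Order.TTheory GRing.Theory Num.Theory.
Local Open Scope classical_set_scope.
Local Open Scope ring_scope.

(* The p-adic numbers Q_p, realised as the inverse limit                     *)
(*     Q_p  =  lim_n  Q_p / p^n Z_p  =  lim_n  Z[1/p] / p^n Z .              *)
(* An element x of Q_p is represented by the sequence n |-> (x mod p^n Z_p), *)
(* each residue given by its canonical representative in [0, p^n) /\ Z[1/p].*)
(* Hence representation is unique, and equality of p-adic numbers is        *)
(* (extensional) equality of sequences.                                     *)

Definition qp_raw := nat -> rat.

Definition rmod (q m : rat) : rat := q - (Num.floor (q / m))%:~R * m.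

Definition is_qp (p : nat) (x : qp_raw) : Prop :=
  forall n : nat,
    [/\ exists k : nat, (p ^ k)%:R * x n \is a Num.int,
        0 <= x n, x n < (p ^ n)%:R
      & (x n.+1 - x n) / (p ^ n)%:R \is a Num.int].

Definition qp0 : qp_raw := fun _ => 0.
Definition qp_add (p : nat) (x y : qp_raw) : qp_raw :=
  fun n => rmod (x n + y n) (p ^ n)%:R.

(* multiplication: x*y mod p^n is computed from x_m*y_m for m large enough,
   namely m = n + d + e where p^d, p^e bound the denominators of x and y. *)
Definition qp_mul (p : nat) (x y : qp_raw) : qp_raw :=
  fun n => let m := (n + `|denq (x 0%N)| + `|denq (y 0%N)|)%N in
           rmod (x m * y m) (p ^ n)%:R.

(* |x|_p <= 1, i.e. x \in Z_p: the residue mod Z_p vanishes *)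
Definition in_Zp (p : nat) (x : qp_raw) : Prop := is_qp p x /\ x 0%N = 0.

Definition QpX (p : nat) (X : Type) : set (X -> qp_raw) :=
  [set xi | (forall i, is_qp p (xi i)) /\ finite_set [set i | ~ in_Zp p (xi i)]].

Definition vadd (p : nat) (X : Type) (xi eta : X -> qp_raw) : X -> qp_raw :=
  fun i => qp_add p (xi i) (eta i).
Definition vscale (p : nat) (X : Type) (a : qp_raw) (xi : X -> qp_raw) : X -> qp_raw :=
  fun i => qp_mul p a (xi i).
Definition vzero (X : Type) : X -> qp_raw := fun _ => qp0.

Definition is_Zp_submodule (p : nat) (X : Type) (K : set (X -> qp_raw)) : Prop :=
  [/\ K `<=` @QpX p X, K (@vzero X),
      (forall xi eta, K xi -> K eta -> K (vadd p xi eta))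
    & (forall a xi, in_Zp p a -> K xi -> K (vscale p a xi))].

Definition msum (p : nat) (X : Type) (K L : set (X -> qp_raw)) : set (X -> qp_raw) :=
  [set z | exists xi eta, [/\ K xi, L eta & z = vadd p xi eta]].

(* prod_{i in P} Q_p  x  prod_{j notin P} Z_p, as a subset of Q_p(X) *)
Definition Ybox (p : nat) (X : eqType) (P : seq X) : set (X -> qp_raw) :=
  [set xi | (forall i, is_qp p (xi i)) /\ (forall j, j \notin P -> xi j 0%N = 0)].

(* B is open in the product topology of Ybox P (relative to Ybox P):
   every point of B has a basic product neighbourhood, constraining finitely
   many coordinates F, each to a ball x + p^n Z_p, contained in B. *)
Definition box_open (p : nat) (X : eqType) (P : seq X) (B : set (X -> qp_raw)) : Prop :=
  forall xi, Ybox p P xi -> B xi ->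
    exists (F : seq X) (n : nat),
      forall eta, Ybox p P eta -> (forall i, i \in F -> eta i n = xi i n) -> B eta.

Definition tau_open (p : nat) (X : eqType) (A : set (X -> qp_raw)) : Prop :=
  A `<=` @QpX p X /\ forall P : seq X, box_open p P (A `&` Ybox p P).

Definition tau_closed (p : nat) (X : eqType) (C : set (X -> qp_raw)) : Prop :=
  C `<=` @QpX p X /\ tau_open p (@QpX p X `\` C).

Definition tau_closure (p : nat) (X : eqType) (S : set (X -> qp_raw)) : set (X -> qp_raw) :=
  [set xi | @QpX p X xi /\
     forall C, tau_closed p C -> S `<=` C -> C xi].

(* The pairing, with values in Q_p/Z_p = Z[1/p]/Z  inside R/Z,               *)
(* represented by the canonical representative in [0,1).                     *)
(* The residue of x mod Z_p is x 0.                                          *)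

Definition pairing (p : nat) (X : choiceType) (xi eta : X -> qp_raw) : rat :=
  rmod (\sum_(i \in [set: X]) (qp_mul p (xi i) (eta i) 0%N)) 1.

Definition perp (p : nat) (X : choiceType) (K : set (X -> qp_raw)) : set (X -> qp_raw) :=
  [set xi | @QpX p X xi /\ forall eta, K eta -> pairing p xi eta = 0].

(* Main.v *)
Require Import Defs.
From HB Require Import structures.
From mathcomp Require Import all_boot all_order all_algebra.
From mathcomp Require Import boolp classical_sets functions cardinality fsbigop.
From mathcomp Require Import zify ring lra.

Section Part1.
Set Implicit Arguments. Unset Strict Implicit. Unset Printing Implicit Defensive.
Import Order.TTheory GRing.Theory Num.Theory.
Local Open Scope ring_scope.

Definition cong (m u v : rat) := (u - v) / m \is a Num.int.

Lemma cong_refl m u : cong m u u.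
Proof. by rewrite /cong subrr mul0r. Qed.

Lemma cong_sym m u v : cong m u v -> cong m v u.
Proof. by rewrite /cong -opprB mulNr rpredN. Qed.

Lemma cong_trans m u v w : cong m u v -> cong m v w -> cong m u w.
Proof.
rewrite /cong => h1 h2; have := rpredD h1 h2.
by rewrite -mulrDl addrA subrK.
Qed.

Lemma congD m a b c d : cong m a b -> cong m c d -> cong m (a + c) (b + d).
Proof.
rewrite /cong => h1 h2; have := rpredD h1 h2.
by rewrite -mulrDl opprD addrACA.
Qed.

Lemma congN m a b : cong m a b -> cong m (- a) (- b).
Proof. by rewrite /cong -opprD mulNr rpredN. Qed.

Lemma congB m a b c d : cong m a b -> cong m c d -> cong m (a - c) (b - d).
Proof. by move=> h1 h2; apply: congD => //; apply: congN. Qed.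

Lemma congMz m a b (z : rat) : z \is a Num.int -> cong m a b -> cong m (z * a) (z * b).
Proof.
rewrite /cong => hz h; have := rpredM hz h.
by rewrite mulrA -mulrBr.
Qed.

Lemma cong1_int a b : cong 1 a b = (a - b \is a Num.int).
Proof. by rewrite /cong invr1 mulr1. Qed.

Lemma cong_pow (p k l : nat) a b : (0 < p)%N -> (k <= l)%N ->
  cong (p ^ l)%:R a b -> cong (p ^ k)%:R a b.
Proof.
rewrite /cong => p0 kl h.
have -> : (a - b) / (p ^ k)%:R = (a - b) / (p ^ l)%:R * (p ^ (l - k))%:R.
  rewrite -mulrA; congr (_ * _).
  have -> : (p ^ l = p ^ (l - k) * p ^ k)%N by rewrite -expnD subnK.
  have hk : (p ^ k)%:R != 0 :> rat by rewrite pnatr_eq0 -lt0n expn_gt0 p0.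
  have hk' : (p ^ (l - k))%:R != 0 :> rat by rewrite pnatr_eq0 -lt0n expn_gt0 p0.
  by rewrite natrM invfM mulrAC mulVf // mul1r.
by rewrite rpredM // natr_int.
Qed.

Lemma rmod_cong m q : m != 0 -> cong m q (rmod q m).
Proof.
move=> mz; rewrite /cong /rmod.
have -> : (q - (q - (Num.floor (q / m))%:~R * m)) / m = (Num.floor (q / m))%:~R.
  by field.
exact: intr_int.
Qed.

Lemma rmod_ge0 m q : 0 < m -> 0 <= rmod q m.
Proof.
move=> m0; rewrite /rmod subr_ge0 -ler_pdivlMr //.
exact: floor_le.
Qed.

Lemma rmod_lt m q : 0 < m -> rmod q m < m.
Proof.
move=> m0; rewrite /rmod ltrBlDr.
have h := floorD1_gt (q / m).
have -> : m + (Num.floor (q / m))%:~R * m = ((Num.floor (q / m) + 1)%:~R) * m.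
  by rewrite intrD; ring.
by rewrite -ltr_pdivrMr.
Qed.

Lemma rmod_uniq m q a : 0 < m -> 0 <= a -> a < m -> cong m q a -> rmod q m = a.
Proof.
move=> m0 a0 am; rewrite /cong => /intrP [k hk].
have mz : m != 0 by rewrite gt_eqF.
have hq : q / m = k%:~R + a / m.
  by rewrite -hk; field.
rewrite /rmod.
have -> : Num.floor (q / m) = k.
  apply: floor_def; rewrite hq intrD lerDl divr_ge0 ?(ltW m0) //=.
  by rewrite ltrD2l ltr_pdivrMr // mul1r.
have -> : q = (q / m) * m by field.
by rewrite hq; field.
Qed.

Lemma cong_eq m a b : 0 < m -> 0 <= a -> a < m -> 0 <= b -> b < m -> cong m a b -> a = b.
Proof.
move=> m0 a0 am b0 bm h.
rewrite -(rmod_uniq m0 b0 bm h) (@rmod_uniq m a a) //; exact: cong_refl.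
Qed.

Lemma rmod_int_cong m q : m != 0 -> ((q - rmod q m) / m) \is a Num.int.
Proof. exact: rmod_cong. Qed.

End Part1.

Section Part2.
Set Implicit Arguments. Unset Strict Implicit. Unset Printing Implicit Defensive.
Import Order.TTheory GRing.Theory Num.Theory.
Local Open Scope ring_scope.

Lemma den_dvd (q : rat) (d : int) : q * d%:~R \is a Num.int -> (denq q %| d)%Z.
Proof.
move=> /intrP [z hz].
have h : numq q * d = z * denq q.
  apply/eqP; rewrite -(eqr_int rat) !intrM numqE -hz; apply/eqP; ring.
have : (denq q %| numq q * d)%Z by rewrite h dvdz_mull.
rewrite Gauss_dvdzr // coprimez_sym /coprimez.
exact: coprime_num_den.
Qed.

Section Valid.
Variable p : nat.
Hypothesis hp : prime p.

Notation P k := ((p ^ k)%:R : rat).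

Lemma p_gt0 : (0 < p)%N. Proof. exact: prime_gt0. Qed.
Lemma p_gt1 : (1 < p)%N. Proof. exact: prime_gt1. Qed.

Lemma P_gt0 k : 0 < P k.
Proof. by rewrite ltr0n expn_gt0 p_gt0. Qed.

Lemma P_neq0 k : P k != 0.
Proof. by rewrite gt_eqF // P_gt0. Qed.

Lemma P_int k : P k \is a Num.int. Proof. exact: natr_int. Qed.

Lemma PD k l : P (k + l) = P k * P l. Proof. by rewrite expnD natrM. Qed.

Lemma PdivB k l : (k <= l)%N -> P l / P k = P (l - k).
Proof.
move=> kl; by rewrite -{1}(subnK kl) PD mulfK ?P_neq0.
Qed.

Lemma qp_range x k : is_qp p x -> 0 <= x k /\ x k < P k.
Proof. by move=> h; case: (h k). Qed.

Lemma qp_step x k : is_qp p x -> cong (P k) (x k.+1) (x k).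
Proof. by move=> h; case: (h k). Qed.

Lemma qp_chain x k l : is_qp p x -> (k <= l)%N -> cong (P k) (x l) (x k).
Proof.
move=> hx; elim: l => [|l IH]; first by rewrite leqn0 => /eqP ->; apply: cong_refl.
rewrite leq_eqVlt => /orP [/eqP <-|]; first exact: cong_refl.
rewrite ltnS => kl; apply: cong_trans (IH kl).
by apply: (@cong_pow p k l) => //; [exact: p_gt0 | exact: qp_step].
Qed.

Lemma qp_int0 x k : is_qp p x -> x 0%N = 0 -> x k \is a Num.int.
Proof.
move=> hx h0; have := @qp_chain x 0 k hx (leq0n k).
by rewrite h0 expn0 cong1_int subr0.
Qed.

Definition Dn (x : qp_raw) : nat := `|denq (x 0%N)|%N.

Lemma Dn_int x k : is_qp p x -> (Dn x)%:R * x k \is a Num.int.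
Proof.
move=> hx; have := @qp_chain x 0 k hx (leq0n k); rewrite expn0 cong1_int => h.
have -> : x k = (x k - x 0%N) + x 0%N by rewrite subrK.
rewrite mulrDr rpredD //; first by rewrite rpredM // natr_int.
have -> : (Dn x)%:R = (denq (x 0%N))%:~R :> rat.
  by rewrite /Dn -[in RHS]absz_denq.
by rewrite mulrC -numqE intr_int.
Qed.

Lemma Dn_pow x : is_qp p x -> exists e, Dn x = (p ^ e)%N.
Proof.
move=> hx; case: (hx 0%N) => [[k hk] _ _ _].
have : (denq (x 0%N) %| ((p ^ k)%N : int))%Z.
  by apply: den_dvd; rewrite mulrC.
rewrite dvdzE absz_nat /Dn => /(dvdn_pfactor _ _ hp) [e _ ->]; by exists e.
Qed.

Lemma Dn_gt0 x : (0 < Dn x)%N.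
Proof. by rewrite /Dn absz_gt0 denq_neq0. Qed.

Lemma Dn_div x k : is_qp p x -> (Dn x <= k)%N -> P k / (Dn x)%:R \is a Num.int.
Proof.
move=> hx hk; case: (Dn_pow hx) => e he; rewrite he PdivB ?P_int //.
apply: leq_trans hk; rewrite he; apply: ltnW; exact: ltn_expl p_gt1.
Qed.

End Valid.

End Part2.

Section Part3.
Set Implicit Arguments. Unset Strict Implicit. Unset Printing Implicit Defensive.
Import Order.TTheory GRing.Theory Num.Theory.
Local Open Scope ring_scope.

Section Mul.
Variable p : nat.
Hypothesis hp : prime p.
Notation P k := ((p ^ k)%:R : rat).

Lemma key_int (a b : rat) (D : nat) k : (0 < D)%N -> D%:R * a \is a Num.int ->
  b / P k \is a Num.int -> P k / D%:R \is a Num.int -> a * b \is a Num.int.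
Proof.
move=> D0 h1 h2 h3.
have Dz : D%:R != 0 :> rat by rewrite pnatr_eq0 -lt0n.
have -> : a * b = (D%:R * a) * (b / P k) * (P k / D%:R).
  by field; rewrite Dz (P_neq0 hp).
by rewrite rpredM // rpredM.
Qed.

Lemma key_x x (b : rat) k : is_qp p x -> (Dn x <= k)%N -> b / P k \is a Num.int ->
  forall l, x l * b \is a Num.int.
Proof.
move=> hx hk hb l; apply: (@key_int _ _ (Dn x) k) => //.
- exact: Dn_gt0.
- exact: (Dn_int hp).
- exact: (Dn_div hp).
Qed.

Lemma mul_stab x y k l : is_qp p x -> is_qp p y -> (Dn x + Dn y <= k)%N -> (k <= l)%N ->
  cong 1 (x l * y l) (x k * y k).
Proof.
move=> hx hy hk kl; rewrite cong1_int.
have -> : x l * y l - x k * y k = x l * (y l - y k) + y k * (x l - x k) by ring.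
apply: rpredD.
  apply: (key_x hx (k := k)); first by apply: leq_trans hk; apply: leq_addr.
  exact: (qp_chain hp hy kl).
apply: (key_x hy (k := k)); first by apply: leq_trans hk; apply: leq_addl.
exact: (qp_chain hp hx kl).
Qed.

Lemma qp_mul0_cong x y k : is_qp p x -> is_qp p y -> (Dn x + Dn y <= k)%N ->
  cong 1 (qp_mul p x y 0) (x k * y k).
Proof.
move=> hx hy hk; rewrite /qp_mul add0n expn0.
apply: cong_sym; apply: cong_trans (rmod_cong _ _); last exact: oner_neq0.
exact: mul_stab.
Qed.

Lemma qp_mul0_range x y : 0 <= qp_mul p x y 0 /\ qp_mul p x y 0 < 1.
Proof.
rewrite /qp_mul expn0; split; [exact: rmod_ge0 | exact: rmod_lt].
Qed.

Lemma qp_mul0C x y : qp_mul p x y 0 = qp_mul p y x 0.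
Proof. by rewrite /qp_mul add0n add0n addnC mulrC. Qed.

Lemma qp_mul0_Zp x y : in_Zp p x -> in_Zp p y -> qp_mul p x y 0 = 0.
Proof.
move=> [hx x0] [hy y0]; rewrite /qp_mul expn0; apply: rmod_uniq => //.
rewrite cong1_int subr0; apply: rpredM; exact: (qp_int0 hp).
Qed.

Lemma qp_add_cong x y k : cong (P k) (qp_add p x y k) (x k + y k).
Proof. apply: cong_sym; apply: rmod_cong; exact: (P_neq0 hp). Qed.

Lemma qp_add_valid x y : is_qp p x -> is_qp p y -> is_qp p (qp_add p x y).
Proof.
move=> hx hy k; split.
- case: (hx k) => [[a ha] _ _ _]; case: (hy k) => [[b hb] _ _ _].
  exists (a + b)%N.
  have := qp_add_cong x y k; rewrite /cong => h.
  have -> : P (a + b) * qp_add p x y k =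
     P b * (P a * x k) + P a * (P b * y k) - P (a + b) * ((x k + y k - qp_add p x y k) / P k) * P k.
    rewrite !PD; field; exact: (P_neq0 hp).
  have h' : (x k + y k - qp_add p x y k) / P k \is a Num.int.
    by rewrite -opprB mulNr rpredN.
  apply: rpredB; first by apply: rpredD; apply: rpredM => //; exact: P_int.
  by apply: rpredM; [apply: rpredM => //; exact: P_int | exact: P_int].
- apply: rmod_ge0; exact: (P_gt0 hp).
- apply: rmod_lt; exact: (P_gt0 hp).
- have h1 := qp_add_cong x y k.+1.
  have h2 := qp_add_cong x y k.
  have h1' : cong (P k) (qp_add p x y k.+1) (x k.+1 + y k.+1).
    by apply: (cong_pow (l := k.+1)) => //; exact: (p_gt0 hp).
  apply: cong_trans h1' _; apply: cong_trans _ (cong_sym h2).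
  by apply: congD; [exact: (qp_step k hx) | exact: (qp_step k hy)].
Qed.

Lemma qp_mul0_add x y z : is_qp p x -> is_qp p y -> is_qp p z ->
  cong 1 (qp_mul p x (qp_add p y z) 0) (qp_mul p x y 0 + qp_mul p x z 0).
Proof.
move=> hx hy hz; have hu := qp_add_valid hy hz.
set u := qp_add p y z.
set k := (Dn x + Dn y + Dn z + Dn u)%N.
have h1 := @qp_mul0_cong x u k hx hu ltac:(rewrite /k; lia).
have h2 := @qp_mul0_cong x y k hx hy ltac:(rewrite /k; lia).
have h3 := @qp_mul0_cong x z k hx hz ltac:(rewrite /k; lia).
apply: cong_trans h1 _; apply: cong_trans _ (cong_sym (congD h2 h3)).
rewrite cong1_int.
have -> : x k * u k - (x k * y k + x k * z k) = x k * (u k - (y k + z k)) by ring.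
apply: (key_x hx (k := k)); first by rewrite /k; lia.
exact: qp_add_cong.
Qed.

Lemma qp_mul0_loc x x' y N : is_qp p x -> is_qp p x' -> is_qp p y -> (Dn y <= N)%N ->
  x' N = x N -> qp_mul p x' y 0 = qp_mul p x y 0.
Proof.
move=> hx hx' hy hN e.
set k := (N + Dn x + Dn x' + Dn y)%N.
have h1 := @qp_mul0_cong x' y k hx' hy ltac:(rewrite /k; lia).
have h2 := @qp_mul0_cong x y k hx hy ltac:(rewrite /k; lia).
have [r1 r1'] := qp_mul0_range x' y; have [r2 r2'] := qp_mul0_range x y.
apply: (cong_eq ltr01) => //.
apply: cong_trans h1 _; apply: cong_trans _ (cong_sym h2).
rewrite cong1_int.
have -> : x' k * y k - x k * y k = y k * ((x' k - x' N) - (x k - x N)) by rewrite e; ring.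
apply: (key_x hy (k := N)) => //.
rewrite /cong in hN.
have c1 := @qp_chain p hp x' N k hx' ltac:(rewrite /k; lia).
have c2 := @qp_chain p hp x N k hx ltac:(rewrite /k; lia).
by rewrite mulrBl rpredB.
Qed.

End Mul.

End Part3.

Section Part4.
Set Implicit Arguments. Unset Strict Implicit. Unset Printing Implicit Defensive.
Import Order.TTheory GRing.Theory Num.Theory.
Local Open Scope classical_set_scope.
Local Open Scope ring_scope.

Lemma fsum_seq (X : choiceType) (f : X -> rat) (s : seq X) : uniq s ->
  (forall i, i \notin s -> f i = 0) -> \sum_(i \in [set: X]) f i = \sum_(i <- s) f i.
Proof.
move=> us h; rewrite (fsbigE s) //; last by move=> i _; apply: h.
by apply: eq_bigl => i; rewrite in_setT.
Qed.

Lemma cong_sum (X : Type) (s : seq X) (f g : X -> rat) :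
  (forall i, cong 1 (f i) (g i)) ->
  cong 1 (\sum_(i <- s) f i) (\sum_(i <- s) g i).
Proof.
move=> h; rewrite cong1_int -sumrB; apply: rpred_sum => i _.
by rewrite -cong1_int.
Qed.

Lemma rmod1_cong q : cong 1 (rmod q 1) q.
Proof. apply: cong_sym; apply: rmod_cong; exact: oner_neq0. Qed.

Lemma rmod1_range q : 0 <= rmod q 1 /\ rmod q 1 < 1.
Proof. split; [exact: rmod_ge0 | exact: rmod_lt]. Qed.

Lemma rmod1_eq q q' : cong 1 q q' -> rmod q 1 = rmod q' 1.
Proof.
move=> h; have [a b] := rmod1_range q; have [c d] := rmod1_range q'.
apply: (cong_eq ltr01) => //.
apply: cong_trans (rmod1_cong q) _; apply: cong_trans h _; apply: cong_sym; exact: rmod1_cong.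
Qed.

Lemma rmod1_0 q : cong 1 q 0 -> rmod q 1 = 0.
Proof. move=> h; rewrite (rmod1_eq h); apply: rmod_uniq => //; exact: cong_refl. Qed.

Section Pair.
Variable p : nat.
Hypothesis hp : prime p.
Variable X : choiceType.
Notation P k := ((p ^ k)%:R : rat).

Definition covers (z : X -> qp_raw) (s : seq X) := forall i, ~ in_Zp p (z i) -> i \in s.

Lemma QpX_seq z : @QpX p X z -> exists s, covers z s.
Proof.
move=> [_ /finite_seqP [s hs]]; exists s => i hi.
have : [set i | ~ in_Zp p (z i)] i by [].
by rewrite hs.
Qed.

Lemma covers_cat z s s' : covers z s -> covers z (s ++ s').
Proof. by move=> h i /h; rewrite mem_cat => ->. Qed.

Lemma covers_catr z s s' : covers z s' -> covers z (s ++ s').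
Proof. by move=> h i /h; rewrite mem_cat orbC => ->. Qed.

Lemma covers_undup z s : covers z s -> covers z (undup s).
Proof. by move=> h i /h; rewrite mem_undup. Qed.

Lemma pairing_seq z w s : @QpX p X z -> @QpX p X w -> covers z s -> covers w s ->
  pairing p z w = rmod (\sum_(i <- undup s) qp_mul p (z i) (w i) 0%N) 1.
Proof.
move=> [hz _] [hw _] cz cw; rewrite /pairing (@fsum_seq _ _ (undup s)) ?undup_uniq // => i.
rewrite mem_undup => nis; apply: (qp_mul0_Zp hp).
  by case: (pselect (in_Zp p (z i))) => H; [exact: H | have := cz i H; rewrite (negbTE nis)].
by case: (pselect (in_Zp p (w i))) => H; [exact: H | have := cw i H; rewrite (negbTE nis)].
Qed.

Lemma pairingC (z w : X -> qp_raw) : pairing p z w = pairing p w z.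
Proof.
rewrite /pairing; congr rmod; apply: eq_fsbigr => i _; exact: qp_mul0C.
Qed.

Lemma pairing_range (z w : X -> qp_raw) : 0 <= pairing p z w /\ pairing p z w < 1.
Proof. exact: rmod1_range. Qed.

Lemma pairing_vzero (z : X -> qp_raw) : pairing p z (@vzero X) = 0.
Proof.
rewrite /pairing fsbig1 ?rmod1_0 ?cong_refl // => i _.
rewrite /qp_mul /vzero /qp0 mulr0 expn0; apply: rmod_uniq => //; exact: cong_refl.
Qed.

Lemma QpX_valid z i : @QpX p X z -> is_qp p (z i).
Proof. by case=> h _. Qed.

Lemma vadd0 w : @QpX p X w -> vadd p w (@vzero X) = w.
Proof.
move=> hw; apply/funext => i; apply/funext => k.
rewrite /vadd /qp_add /vzero /qp0 addr0.
have [a b] := qp_range k (QpX_valid i hw).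
apply: rmod_uniq => //; [exact: (P_gt0 hp) | exact: cong_refl].
Qed.

Lemma QpX_vadd w w' : @QpX p X w -> @QpX p X w' -> @QpX p X (vadd p w w').
Proof.
move=> hw hw'; split; first by move=> i; apply: (qp_add_valid hp); apply: QpX_valid.
case: (QpX_seq hw) => s hs; case: (QpX_seq hw') => s' hs'.
apply/finite_seqP; exists [seq i <- s ++ s' | ~~ `[< in_Zp p (vadd p w w' i) >]].
apply/seteqP; split => i /=.
  move=> hi; rewrite mem_filter; apply/andP; split; first by apply/negP => /asboolP.
  rewrite mem_cat; case: (boolP ((i \in s) || (i \in s'))) => // /norP [h1 h2]; exfalso; apply: hi.
  have z1 : in_Zp p (w i) by case: (pselect (in_Zp p (w i))) => H; [exact: H | have := hs i H; rewrite (negbTE h1)].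
  have z2 : in_Zp p (w' i) by case: (pselect (in_Zp p (w' i))) => H; [exact: H | have := hs' i H; rewrite (negbTE h2)].
  split; first by apply: (qp_add_valid hp); apply: QpX_valid.
  rewrite /vadd /qp_add z1.2 z2.2 addr0 expn0; apply: rmod_uniq => //; exact: cong_refl.
by rewrite mem_filter => /andP [/asboolP].
Qed.

Lemma pairing_add z w w' : @QpX p X z -> @QpX p X w -> @QpX p X w' ->
  cong 1 (pairing p z (vadd p w w')) (pairing p z w + pairing p z w').
Proof.
move=> hz hw hw'; have hv := QpX_vadd hw hw'.
case: (QpX_seq hz) => sz cz; case: (QpX_seq hw) => sw cw.
case: (QpX_seq hw') => sw' cw'; case: (QpX_seq hv) => sv cv.
set s := sz ++ sw ++ sw' ++ sv.
have cz' : covers z s by apply: covers_cat.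
have cw2 : covers w s by apply: covers_catr; apply: covers_cat.
have cw2' : covers w' s by do 2 apply: covers_catr; apply: covers_cat.
have cv2 : covers (vadd p w w') s by do 3 apply: covers_catr.
rewrite (pairing_seq hz hv cz' cv2) (pairing_seq hz hw cz' cw2) (pairing_seq hz hw' cz' cw2').
apply: cong_trans (rmod1_cong _) _.
apply: cong_sym; apply: cong_trans (congD (rmod1_cong _) (rmod1_cong _)) _.
rewrite -big_split /=; apply: cong_sum => i; apply: cong_sym.
by apply: (qp_mul0_add hp) => //; apply: QpX_valid.
Qed.

Lemma pairing_add0 z w w' : @QpX p X z -> @QpX p X w -> @QpX p X w' ->
  pairing p z w = 0 -> pairing p z w' = 0 -> pairing p z (vadd p w w') = 0.
Proof.
move=> hz hw hw' e1 e2; have h := pairing_add hz hw hw'; rewrite e1 e2 addr0 in h.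
have [a b] := pairing_range z (vadd p w w').
by apply: (cong_eq ltr01) => //.
Qed.

End Pair.

End Part4.

Section Part5.
Set Implicit Arguments. Unset Strict Implicit. Unset Printing Implicit Defensive.
Import Order.TTheory GRing.Theory Num.Theory.
Local Open Scope classical_set_scope.
Local Open Scope ring_scope.

Lemma leq_sum_seq (I : eqType) (f : I -> nat) (s : seq I) i :
  i \in s -> (f i <= \sum_(j <- s) f j)%N.
Proof. by move=> h; rewrite (big_rem i) //= leq_addr. Qed.

Section Cont.
Variable p : nat.
Hypothesis hp : prime p.
Variable X : choiceType.

Lemma Ybox_covers (Pl : seq X) z : Ybox p Pl z -> covers p z Pl.
Proof.
move=> [hz h0] i hi; case: (boolP (i \in Pl)) => // nin.
by exfalso; apply: hi; split; [exact: hz | exact: h0].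
Qed.

Lemma Ybox_QpX (Pl : seq X) z : Ybox p Pl z -> @QpX p X z.
Proof.
move=> hY; split; first by case: hY.
apply: (@sub_finite_set _ _ [set` Pl]); last exact: finite_seq.
by move=> i /= hi; exact: (Ybox_covers hY).
Qed.

Lemma perp_closed (S : set (X -> qp_raw)) : S `<=` @QpX p X -> tau_closed p (perp p S).
Proof.
move=> SQ; split; first by move=> z [].
split; first by move=> z [].
move=> Pl xi hYxi [[hxi nperp] _].
have [w [Sw nw]] : exists w, S w /\ pairing p xi w <> 0.
  apply: contrapT => hn; apply: nperp; split => // eta Seta.
  by apply: contrapT => ne; apply: hn; exists eta.
have hw := SQ _ Sw.
case: (QpX_seq hw) => sw cw.
set F := Pl ++ sw.
exists F, (\sum_(i <- F) Dn (w i))%N => eta hYeta agree.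
split => //; split; first exact: Ybox_QpX hYeta.
move=> [_ hperp]; apply: nw; rewrite -(hperp w Sw).
have hE := Ybox_QpX hYeta.
rewrite (pairing_seq hp hxi hw (s := F)); last exact: covers_catr.
  rewrite (pairing_seq hp hE hw (s := F)); last exact: covers_catr.
    congr rmod; apply: eq_big_seq => i; rewrite mem_undup => iF.
    apply: (qp_mul0_loc hp (N := (\sum_(i <- F) Dn (w i))%N)); try exact: QpX_valid.
      exact: leq_sum_seq.
    by rewrite agree.
  by apply: covers_cat; apply: Ybox_covers.
by apply: covers_cat; apply: Ybox_covers.
Qed.

End Cont.

End Part5.

Section Part6.
Set Implicit Arguments. Unset Strict Implicit. Unset Printing Implicit Defensive.
Import Order.TTheory GRing.Theory Num.Theory.
Local Open Scope classical_set_scope.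
Local Open Scope ring_scope.

Lemma euclid (T : int -> Prop) : T 0 -> (forall a b, T a -> T b -> T (a - b)) ->
  (exists N : nat, (0 < N)%N /\ T N) ->
  exists d : nat, [/\ (0 < d)%N, T d, (forall b, T b -> exists q : int, b = q * d)
                   & (forall d' : nat, (0 < d')%N -> (d' < d)%N -> ~ T d')].
Proof.
move=> T0 TB hN.
have TN a : T a -> T (- a) by move=> Ta; rewrite -sub0r; exact: TB.
have TD a b : T a -> T b -> T (a + b) by move=> Ta Tb; rewrite -(opprK b); apply: TB => //; exact: TN.
have TMn a (m : nat) : T a -> T (m%:Z * a).
  move=> Ta; elim: m => [|m IH]; first by rewrite mul0r.
  by rewrite -addn1 PoszD mulrDl mul1r; exact: TD.
have TM a (q : int) : T a -> T (q * a).
  move=> Ta; case: q => m; first exact: TMn.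
  by rewrite NegzE mulNr; apply: TN; exact: TMn.
pose Pd := fun d : nat => (0 < d)%N && `[< T d >].
have exP : exists d, Pd d.
  by case: hN => N [N0 TN']; exists N; rewrite /Pd N0; apply/asboolP.
case: (ex_minnP exP) => d /andP [d0 /asboolP Td] dmin.
exists d; split => //.
  move=> b Tb; exists (b %/ d)%Z.
  have dz : (d%:Z != 0) by rewrite eqz_nat -lt0n.
  have r0 : (0 <= (b %% d)%Z) by apply: modz_ge0.
  have rlt : ((b %% d)%Z < d%:Z) by rewrite ltz_mod.
  have Tr : T (b %% d)%Z.
    have -> : (b %% d)%Z = b - (b %/ d)%Z * d by rewrite {2}(divz_eq b d) addrAC subrr add0r.
    by apply: TB => //; exact: TM.
  case: (eqVneq (b %% d)%Z 0) => [r00|rn0].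
    by rewrite {1}(divz_eq b d) r00 addr0.
  exfalso.
  have : (d <= `|(b %% d)%Z|%N)%N.
    apply: dmin; rewrite /Pd; apply/andP; split.
      by rewrite absz_gt0.
    by apply/asboolP; rewrite gez0_abs.
  by move: rlt; rewrite -{1}(gez0_abs r0) ltz_nat; case: leqP.
move=> d' d'0 d'lt Td'.
have : (d <= d')%N by apply: dmin; rewrite /Pd d'0; apply/asboolP.
by rewrite leqNgt d'lt.
Qed.

Definition fadd (X : Type) (g h : X -> rat) : X -> rat := fun j => g j + h j.
Definition fscale (X : Type) (c : rat) (g : X -> rat) : X -> rat := fun j => c * g j.
Definition fzero (X : Type) : X -> rat := fun _ => 0.

Section ST.
Variable p : nat.
Hypothesis hp : prime p.
Variable X : countType.
Variable S : set (X -> qp_raw).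
Hypothesis hSQ : S `<=` @QpX p X.
Hypothesis hS0 : S (@vzero X).
Hypothesis hSadd : forall s t, S s -> S t ->
  exists u, S u /\ forall j k, cong (p ^ k)%:R (u j k) (s j k + t j k).
Variable xi : X -> qp_raw.
Variables Pl F : seq X.
Variable n : nat.
Hypothesis hxi : @QpX p X xi.
Hypothesis hYxi : Ybox p Pl xi.
Hypothesis hbox : forall z, Ybox p Pl z -> (forall i, i \in F -> z i n = xi i n) -> ~ S z.

Notation P k := ((p ^ k)%:R : rat).

Definition nj (j : X) : nat := if j \in F then n else 0%N.
Definition eqv (g h : X -> rat) := forall j, cong (P (nj j)) (g j) (h j).
Definition pi (z : X -> qp_raw) : X -> rat := fun j => z j (nj j).
Definition Hset (h : X -> rat) := exists s, S s /\ eqv h (pi s).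

Lemma eqv_refl g : eqv g g. Proof. by move=> j; apply: cong_refl. Qed.
Lemma eqv_sym g h : eqv g h -> eqv h g. Proof. by move=> e j; apply: cong_sym. Qed.
Lemma eqv_trans g h k : eqv g h -> eqv h k -> eqv g k.
Proof. by move=> e1 e2 j; apply: cong_trans (e1 j) (e2 j). Qed.
Lemma eqv_ext g h : (forall j, g j = h j) -> eqv g h.
Proof. by move=> e j; rewrite e; apply: cong_refl. Qed.
Lemma eqvD g g' h h' : eqv g h -> eqv g' h' -> eqv (fadd g g') (fadd h h').
Proof. by move=> e1 e2 j; apply: congD. Qed.
Lemma eqvZ (c : rat) g h : c \is a Num.int -> eqv g h -> eqv (fscale c g) (fscale c h).
Proof. by move=> hc e j; apply: congMz. Qed.

Lemma Hset_eqv g h : eqv g h -> Hset g -> Hset h.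
Proof. move=> e [s [Ss es]]; exists s; split => //; exact: eqv_trans (eqv_sym e) es. Qed.

Lemma Hset0 : Hset (@fzero X).
Proof. exists (@vzero X); split => //; exact: eqv_ext. Qed.

Lemma Hset_add g h : Hset g -> Hset h -> Hset (fadd g h).
Proof.
move=> [s [Ss es]] [t [St et]]; case: (hSadd Ss St) => u [Su hu].
exists u; split => //; apply: eqv_trans (eqvD es et) _.
by move=> j; apply: cong_sym; exact: hu.
Qed.

Lemma torsion_pi z : @QpX p X z -> exists N, eqv (fscale (P N) (pi z)) (@fzero X).
Proof.
move=> hz; case: (QpX_seq hz) => s cs.
have : exists N, forall j, j \in s ++ F -> cong (P (nj j)) (P N * pi z j) 0.
  elim: (s ++ F) => [|a l [N IH]]; first by exists 0%N.
  case: (hz.1 a (nj a)) => [[e he] _ _ _].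
  exists (N + e + nj a)%N => j; rewrite in_cons => /orP [/eqP ->|jl].
    rewrite /cong subr0 /pi.
    have -> : P (N + e + nj a) * z a (nj a) / P (nj a) = P N * (P e * z a (nj a)).
      by rewrite !PD; field; exact: (P_neq0 hp).
    by rewrite rpredM // P_int.
  have := IH j jl; rewrite /cong !subr0 => h.
  have -> : P (N + e + nj a) * pi z j / P (nj j) = P N * pi z j / P (nj j) * P (e + nj a).
    by rewrite -addnA PD; field; exact: (P_neq0 hp).
  by rewrite rpredM // P_int.
case=> N hN; exists N => j; case: (boolP (j \in s ++ F)) => [/hN //|].
rewrite mem_cat negb_or => /andP [js jF].
have zj : in_Zp p (z j) by case: (pselect (in_Zp p (z j))) => H; [exact: H | have := cs j H; rewrite (negbTE js)].
rewrite /cong /fscale /fzero /pi /nj (negbTE jF) zj.2 mulr0 subr0 mul0r; exact: rpred0.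
Qed.

Lemma Hset_nat g (m : nat) : Hset g -> Hset (fscale m%:R g).
Proof.
move=> hg; elim: m => [|m IH].
  apply: Hset_eqv Hset0; apply: eqv_ext => j; by rewrite /fscale mul0r.
apply: Hset_eqv (Hset_add IH hg); apply: eqv_ext => j.
by rewrite /fscale /fadd -addn1 natrD mulrDl mul1r.
Qed.

Lemma Hset_opp g : Hset g -> Hset (fscale (-1) g).
Proof.
move=> hg; have [s [Ss es]] := hg.
case: (torsion_pi (hSQ Ss)) => N hN.
have h1 := Hset_nat (p ^ N).-1 hg.
apply: Hset_eqv h1 => j.
have := hN j; have := es j; rewrite /cong /fscale /fzero => a b.
have e : ((p ^ N).-1%:R : rat) = P N - 1.
  have h0 : (0 < p ^ N)%N by rewrite expn_gt0 (p_gt0 hp).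
  by rewrite -subn1 natrB.
rewrite e.
have -> : ((P N - 1) * g j - -1 * g j) / P (nj j)
        = P N * ((g j - pi s j) / P (nj j)) + (P N * pi s j - 0) / P (nj j).
  by field; exact: (P_neq0 hp).
by rewrite rpredD // rpredM // P_int.
Qed.

Lemma Hset_int g (c : int) : Hset g -> Hset (fscale c%:~R g).
Proof.
move=> hg; case: c => m; first exact: Hset_nat.
apply: Hset_eqv (Hset_opp (Hset_nat m.+1 hg)); apply: eqv_ext => j.
by rewrite /fscale NegzE mulN1r intrN mulNr.
Qed.

Lemma Hset_sub g h : Hset g -> Hset h -> Hset (fadd g (fscale (-1) h)).
Proof. by move=> hg hh; apply: Hset_add => //; exact: Hset_opp. Qed.

Lemma box_contra s : S s -> ~ eqv (pi xi) (pi s).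
Proof.
move=> Ss e; have hs := hSQ Ss.
have eqj j : s j (nj j) = xi j (nj j).
  have [a b] := qp_range (nj j) (QpX_valid j hs).
  have [c d] := qp_range (nj j) (QpX_valid j hxi).
  apply: (@cong_eq (P (nj j))) => //; [exact: (P_gt0 hp) | apply: cong_sym; exact: e j].
have eq0 j : s j 0%N = xi j 0%N.
  have c1 := @qp_chain p hp (s j) 0 (nj j) (QpX_valid j hs) (leq0n _).
  have c2 := @qp_chain p hp (xi j) 0 (nj j) (QpX_valid j hxi) (leq0n _).
  rewrite expn0 in c1 c2.
  have [a b] := qp_range 0 (QpX_valid j hs).
  have [c d] := qp_range 0 (QpX_valid j hxi).
  rewrite expn0 in b d.
  apply: (cong_eq ltr01) => //.
  apply: cong_trans (cong_sym c1) _; rewrite eqj; exact: c2.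
apply: (hbox (z := s)) => //.
  split; first by move=> i; exact: QpX_valid.
  by move=> j jP; rewrite eq0; case: hYxi => _; apply.
by move=> i iF; have := eqj i; rewrite /nj iF.
Qed.

Definition gen (m : nat) : X -> rat :=
  match m with
  | 0%N => pi xi
  | m'.+1 => match (unpickle m' : option (X * nat)) with
            | Some (j, t) => fun i => if i == j then (P t)^-1 else 0
            | None => @fzero X end
  end.

Arguments gen : simpl never.

Lemma gen_pickle j t : gen (pickle (j, t)).+1 = fun i => if i == j then (P t)^-1 else 0.
Proof. by rewrite /gen pickleK. Qed.

Lemma gen_torsion m : exists N, eqv (fscale (P N) (gen m)) (@fzero X).
Proof.
case: m => [|m]; first exact: torsion_pi.
rewrite /gen; case: (unpickle m) => [[j t]|]; last first.
  by exists 0%N; apply: eqv_ext => i; rewrite /fscale /fzero mulr0.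
exists (t + n)%N => i; rewrite /fscale /fzero /cong subr0.
case: (eqVneq i j) => [->|_]; last by rewrite mulr0 mul0r.
have -> : P (t + n) * (P t)^-1 / P (nj j) = P n / P (nj j).
  by rewrite PD; field; rewrite !(P_neq0 hp).
have hnj : (nj j <= n)%N by rewrite /nj; case: ifP.
by rewrite (PdivB hp hnj) P_int.
Qed.

Definition vecs (l : seq (nat * int)) : X -> rat :=
  fun j => \sum_(e <- l) (e.2)%:~R * gen e.1 j.
Definition vals (f : nat -> rat) (l : seq (nat * int)) : rat :=
  \sum_(e <- l) (e.2)%:~R * f e.1.
Definition scl (c : int) (l : seq (nat * int)) := [seq (e.1, c * e.2) | e <- l].

Lemma vecs_cat l1 l2 j : vecs (l1 ++ l2) j = vecs l1 j + vecs l2 j.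
Proof. by rewrite /vecs big_cat. Qed.
Lemma vals_cat f l1 l2 : vals f (l1 ++ l2) = vals f l1 + vals f l2.
Proof. by rewrite /vals big_cat. Qed.
Lemma vecs_scl c l j : vecs (scl c l) j = c%:~R * vecs l j.
Proof.
rewrite /vecs /scl big_map mulr_sumr; apply: eq_bigr => e _ /=.
by rewrite intrM mulrA.
Qed.
Lemma vals_scl f c l : vals f (scl c l) = c%:~R * vals f l.
Proof.
rewrite /vals /scl big_map mulr_sumr; apply: eq_bigr => e _ /=.
by rewrite intrM mulrA.
Qed.
Lemma vecs_nil j : vecs [::] j = 0. Proof. by rewrite /vecs big_nil. Qed.
Lemma vals_cons f e l : vals f (e :: l) = (e.2)%:~R * f e.1 + vals f l.
Proof. by rewrite /vals big_cons. Qed.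
Lemma vecs_cons e l j : vecs (e :: l) j = (e.2)%:~R * gen e.1 j + vecs l j.
Proof. by rewrite /vecs big_cons. Qed.

Definition Cons (k : nat) (f : nat -> rat) :=
  forall l h, all (fun e => (e.1 < k)%N) l -> Hset h -> eqv (vecs l) h ->
    vals f l \is a Num.int.

Definition T0 (b : int) := Hset (fscale b%:~R (gen 0)).

Lemma base_exists : exists d0 : nat, (1 < d0)%N /\ forall b, T0 b -> exists q : int, b = q * d0.
Proof.
have := @euclid T0.
case.
- by apply: Hset_eqv Hset0; apply: eqv_ext => j; rewrite /fscale /fzero mul0r.
- move=> a b ha hb; apply: Hset_eqv (Hset_sub ha hb); apply: eqv_ext => j.
  by rewrite /fadd /fscale intrB; ring.
- case: (gen_torsion 0) => N hN; exists (p ^ N)%N; split; first by rewrite expn_gt0 (p_gt0 hp).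
  by apply: Hset_eqv Hset0; apply: eqv_sym.
move=> d [d0 Td hdiv hmin]; exists d; split => //.
rewrite ltn_neqAle d0 andbT; apply/negP => /eqP d1; subst d.
move: Td; rewrite /T0 => /(Hset_eqv (h := pi xi)).
case; first by apply: eqv_ext => j; rewrite /fscale mul1r.
by move=> s [Ss es]; apply: (box_contra Ss).
Qed.

Definition upd (f : nat -> rat) (k : nat) (c : rat) : nat -> rat :=
  fun i => if i == k then c else f i.

Lemma vals_ext f g l : (forall e, e \in l -> f e.1 = g e.1) -> vals f l = vals g l.
Proof. by move=> h; rewrite /vals; apply: eq_big_seq => e /h ->. Qed.

Lemma Cons_ext k f g : (forall i, (i < k)%N -> f i = g i) -> Cons k f -> Cons k g.
Proof.
move=> e hf l h al hh el; rewrite -(vals_ext (f := f)); first exact: hf al hh el.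
by move=> x xl; apply: e; move/allP: al => /(_ x xl).
Qed.

Lemma step k f : Cons k f -> exists c, Cons k.+1 (upd f k c).
Proof.
move=> hf.
pose T b := exists l h, [/\ all (fun e => (e.1 < k)%N) l, Hset h &
   eqv (fadd (fscale b%:~R (gen k)) (vecs l)) h].
have := @euclid T; case.
- exists [::], (@fzero X); split => //; first exact: Hset0.
  by apply: eqv_ext => j; rewrite /fadd /fscale vecs_nil mul0r addr0.
- move=> a b [l1 [h1 [a1 H1 e1]]] [l2 [h2 [a2 H2 e2]]].
  exists (l1 ++ scl (-1) l2), (fadd h1 (fscale (-1) h2)); split.
  + by rewrite all_cat a1 /scl all_map.
  + exact: Hset_sub.
  + have hm1 : (-1 : rat) \is a Num.int by rewrite rpredN rpred1.
    move=> j; have := congD (e1 j) (congMz hm1 (e2 j)).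
    by rewrite /fadd /fscale vecs_cat vecs_scl intrB /=; congr cong; ring.
- case: (gen_torsion k) => N hN; exists (p ^ N)%N; split; first by rewrite expn_gt0 (p_gt0 hp).
  exists [::], (@fzero X); split => //; first exact: Hset0.
  by apply: eqv_trans hN; apply: eqv_ext => j; rewrite /fadd vecs_nil addr0.
move=> d [d0 [l0 [h0 [a0 H0 e0]]] hdiv _].
exists (- vals f l0 / d%:R) => l h al hh el.
set b := \sum_(e <- l | e.1 == k) e.2.
set lr := [seq e <- l | e.1 != k].
have alr : all (fun e => (e.1 < k)%N) lr.
  apply/allP => e; rewrite mem_filter => /andP [ne el'].
  by move/allP: al => /(_ e el'); rewrite ltnS leq_eqVlt (negbTE ne).
have hv j : vecs l j = b%:~R * gen k j + vecs lr j.
  rewrite /vecs (bigID (fun e => e.1 == k)) /= big_filter; congr (_ + _).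
  rewrite /b rmorph_sum mulr_suml; apply: eq_bigr => e /eqP ->; done.
have hval : vals (upd f k (- vals f l0 / d%:R)) l = b%:~R * (- vals f l0 / d%:R) + vals f lr.
  rewrite /vals (bigID (fun e => e.1 == k)) /= big_filter; congr (_ + _).
    rewrite /b rmorph_sum mulr_suml; apply: eq_bigr => e /eqP e1.
    by rewrite /upd e1 eqxx.
  apply: eq_bigr => e ne.
  by rewrite /upd (negbTE ne).
have Tb : T b.
  exists lr, h; split => //; apply: eqv_trans el; apply: eqv_ext => j.
  by rewrite hv.
case: (hdiv b Tb) => q bq.
have hl' : vals f (lr ++ scl (- q) l0) \is a Num.int.
  apply: (hf _ (fadd h (fscale (- q)%:~R h0))).
  - by rewrite all_cat alr /scl all_map.
  - apply: Hset_add => //; exact: Hset_int.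
  - move=> j.
    have c1 := el j; have c2 := e0 j.
    have := congD c1 (congMz (intr_int _ (- q)) c2).
    rewrite /fadd /fscale vecs_cat vecs_scl hv bq /= => h3.
    apply: cong_trans h3; rewrite /cong.
    rewrite intrM intrN /=.
    have -> : vecs lr j + - q%:~R * vecs l0 j - ((q%:~R * d%:~R * gen k j + vecs lr j) + - q%:~R * (d%:~R * gen k j + vecs l0 j)) = 0 by ring.
    by rewrite mul0r rpred0.
rewrite hval; move: hl'; rewrite vals_cat vals_scl bq intrM intrN.
have dz : (d%:R : rat) != 0 by rewrite pnatr_eq0 -lt0n.
congr (_ \is a _); by field.
Qed.

Section Build.
Variable d0 : nat.
Hypothesis hd0 : (1 < d0)%N.
Hypothesis hd0T : forall b, T0 b -> exists q : int, b = q * d0.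

Definition f0 : nat -> rat := fun _ => (d0%:R)^-1.

Lemma Cons1 : Cons 1 f0.
Proof.
move=> l h al hh el.
set B := \sum_(e <- l) e.2.
have hv j : vecs l j = B%:~R * gen 0 j.
  rewrite /vecs /B rmorph_sum mulr_suml; apply: eq_big_seq => e el'.
  by move/allP: al => /(_ e el'); rewrite ltnS leqn0 => /eqP ->.
have TB : T0 B.
  apply: Hset_eqv hh; apply: eqv_sym; apply: eqv_trans el; apply: eqv_ext => j.
  by rewrite hv.
case: (hd0T TB) => q hq.
have -> : vals f0 l = B%:~R / d0%:R.
  by rewrite /vals /B rmorph_sum mulr_suml.
have dz : (d0%:R : rat) != 0 by rewrite pnatr_eq0 -lt0n ltnW.
by rewrite hq intrM mulfK // intr_int.
Qed.

Definition ext_val (k : nat) (f : nat -> rat) : rat :=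
  match pselect (exists c, Cons k.+1 (upd f k c)) with
  | left H => proj1_sig (cid H)
  | right _ => 0
  end.

Lemma ext_valP k f : Cons k f -> Cons k.+1 (upd f k (ext_val k f)).
Proof.
move=> hf; rewrite /ext_val; case: pselect => [H|H]; first exact: (proj2_sig (cid H)).
by exfalso; apply: H; exact: step.
Qed.

Fixpoint seqf (k : nat) : nat -> rat :=
  match k with
  | 0%N => f0
  | k'.+1 => upd (seqf k') k'.+1 (ext_val k'.+1 (seqf k'))
  end.

Lemma seqf_cons k : Cons k.+1 (seqf k).
Proof. elim: k => [|k IH]; [exact: Cons1 | exact: ext_valP]. Qed.

Lemma seqf_stable i m : seqf (i + m) i = seqf i i.
Proof.
elim: m => [|m IH]; first by rewrite addn0.
by rewrite addnS /= /upd -IH; case: eqP => // h; exfalso; move: h; lia.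
Qed.

Definition Ffin (i : nat) : rat := seqf i i.

Lemma Ffin0 : Ffin 0 = (d0%:R)^-1. Proof. by []. Qed.

Lemma Cinf l h : Hset h -> eqv (vecs l) h -> vals Ffin l \is a Num.int.
Proof.
have [k hk] : exists k, all (fun e => (e.1 < k)%N) l.
  elim: l => [|e l [k hk]]; first by exists 0%N.
  exists (maxn k e.1.+1) => /=; apply/andP; split; first by rewrite leq_max leqnn orbT.
  by apply: sub_all hk => x /= hx; rewrite leq_max hx.
move=> hh el.
have ag : forall i, (i < k.+1)%N -> seqf k i = Ffin i.
  move=> i ik; rewrite ltnS in ik; rewrite /Ffin -{1}(subnKC ik) seqf_stable //.
have hc := @Cons_ext k.+1 (seqf k) Ffin ag (@seqf_cons k).
apply: (hc l h _ hh el).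
by apply: sub_all hk => x /= hx; exact: ltnW.
Qed.


Definition cc (j : X) (t : nat) : rat := Ffin (pickle (j, t)).+1.

Lemma cc_step j t : cc j t - P 1 * cc j t.+1 \is a Num.int.
Proof.
set i1 := (pickle (j, t)).+1; set i2 := (pickle (j, t.+1)).+1.
have := @Cinf [:: (i1, 1); (i2, - (p%:Z))] (@fzero X) Hset0.
rewrite /vals !big_cons big_nil addr0 /= => h.
have e : P 1 = p%:R by rewrite expn1.
rewrite e; have -> : cc j t - p%:R * cc j t.+1 = 1%:~R * Ffin i1 + (- (p%:Z))%:~R * Ffin i2.
  by rewrite /cc intrN; ring.
apply: h; apply: eqv_ext => i; rewrite /vecs !big_cons big_nil /= /i1 /i2 !gen_pickle /fzero.
case: eqP => _; last by rewrite !mulr0 !addr0.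
rewrite intrN expnSr natrM invfM; field.
by rewrite (P_neq0 hp) pnatr_eq0 -lt0n (p_gt0 hp).
Qed.

Lemma cc_int j t : P (t + nj j) * cc j t \is a Num.int.
Proof.
set i1 := (pickle (j, t)).+1.
have := @Cinf [:: (i1, (p ^ (t + nj j))%N%:Z)] (@fzero X) Hset0.
rewrite /vals !big_cons big_nil addr0 /= => h; apply: h.
move=> i; rewrite /vecs !big_cons big_nil /= /i1 !gen_pickle /fzero addr0 /cong subr0.
case: eqP => [->|_]; last by rewrite mulr0 mul0r rpred0.
have -> : P (t + nj j) * (P t)^-1 / P (nj j) = 1.
  by rewrite PD; field; rewrite !(P_neq0 hp).
exact: (intr_int _ 1).
Qed.

Definition eta : X -> qp_raw := fun j k => rmod (P k * cc j k) (P k).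

Lemma eta_cong j k : cong (P k) (P k * cc j k) (eta j k).
Proof. apply: rmod_cong; exact: (P_neq0 hp). Qed.

Lemma eta_int j k : P (nj j) * eta j k \is a Num.int.
Proof.
have := eta_cong j k; rewrite /cong => h.
have -> : P (nj j) * eta j k = P (k + nj j) * cc j k - P (nj j) * ((P k * cc j k - eta j k) / P k) * P k.
  rewrite PD; field; exact: (P_neq0 hp).
apply: rpredB; first exact: cc_int.
by apply: rpredM; [apply: rpredM; [exact: P_int | exact: h] | exact: P_int].
Qed.

Lemma eta_valid j : is_qp p (eta j).
Proof.
move=> k; split.
- by exists (nj j); exact: eta_int.
- apply: rmod_ge0; exact: (P_gt0 hp).
- apply: rmod_lt; exact: (P_gt0 hp).
- have h1 := eta_cong j k.+1.
  have h1' : cong (P k) (P k.+1 * cc j k.+1) (eta j k.+1).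
    by apply: (cong_pow (l := k.+1)) => //; exact: (p_gt0 hp).
  apply: cong_trans (cong_sym h1') _; apply: cong_trans _ (eta_cong j k).
  rewrite /cong.
  have -> : (P k.+1 * cc j k.+1 - P k * cc j k) / P k = - (cc j k - P 1 * cc j k.+1).
    rewrite -addn1 PD; field; exact: (P_neq0 hp).
  by rewrite rpredN cc_step.
Qed.

Lemma eta_QpX : @QpX p X eta.
Proof.
split; first exact: eta_valid.
apply: (@sub_finite_set _ _ [set` F]); last exact: finite_seq.
move=> j /= hj; case: (boolP (j \in F)) => // jF; exfalso; apply: hj.
split; first exact: eta_valid.
rewrite /eta expn0; apply: rmod_uniq => //.
rewrite /cong subr0 invr1 mulr1 mul1r.
by have := cc_int j 0; rewrite /nj (negbTE jF) add0n expn0 mul1r.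
Qed.


Lemma eta_covers : covers p eta F.
Proof.
move=> j hj; case: (boolP (j \in F)) => // jF; exfalso; apply: hj.
split; first exact: eta_valid.
rewrite /eta expn0; apply: rmod_uniq => //.
rewrite /cong subr0 invr1 mulr1 mul1r.
by have := cc_int j 0; rewrite /nj (negbTE jF) add0n expn0 mul1r.
Qed.

Lemma term_cong z i : @QpX p X z -> exists t (b : int),
  pi z i = b%:~R / P t /\ cong 1 (qp_mul p (z i) (eta i) 0) (b%:~R * cc i t).
Proof.
move=> hz; have hzi := QpX_valid i hz.
case: (hzi (nj i)) => [[t /intrP [b hb]] _ _ _].
have ezi : z i (nj i) = b%:~R / P t.
  by rewrite -hb; field; exact: (P_neq0 hp).
exists t, b; split; first exact: ezi.
set K := (Dn (z i) + Dn (eta i) + t + nj i)%N.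
have c1 := @qp_mul0_cong p hp (z i) (eta i) K hzi (eta_valid i) ltac:(rewrite /K; lia).
apply: cong_trans c1 _.
have c2 : cong 1 (z i K * eta i K) (z i (nj i) * eta i K).
  rewrite cong1_int.
  have -> : z i K * eta i K - z i (nj i) * eta i K = (P (nj i) * eta i K) * ((z i K - z i (nj i)) / P (nj i)).
    by field; exact: (P_neq0 hp).
  apply: rpredM; first exact: eta_int.
  by apply: (qp_chain hp hzi); rewrite /K; lia.
apply: cong_trans c2 _; rewrite ezi.
have c3 : cong 1 (b%:~R / P t * eta i K) (b%:~R / P t * eta i t).
  rewrite cong1_int.
  have -> : b%:~R / P t * eta i K - b%:~R / P t * eta i t = b%:~R * ((eta i K - eta i t) / P t).
    by field; exact: (P_neq0 hp).
  apply: rpredM; first exact: intr_int.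
  by apply: (qp_chain hp (eta_valid i)); rewrite /K; lia.
apply: cong_trans c3 _.
rewrite cong1_int.
have -> : b%:~R / P t * eta i t - b%:~R * cc i t = - (b%:~R * ((P t * cc i t - eta i t) / P t)).
  by field; exact: (P_neq0 hp).
rewrite rpredN; apply: rpredM; first exact: intr_int.
exact: eta_cong.
Qed.

Lemma sum_cong z (L : seq X) : @QpX p X z -> uniq L -> exists l,
  (forall j, vecs l j = if j \in L then pi z j else 0) /\ cong 1 (\sum_(i <- L) qp_mul p (z i) (eta i) 0) (vals Ffin l).
Proof.
move=> hz; elim: L => [|a L IH].
  move=> _; exists [::]; split; first by move=> j; rewrite vecs_nil.
  by rewrite /vals !big_nil; exact: cong_refl.
rewrite cons_uniq => /andP [aL uL]; case: (IH uL) => l [hv hc].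
case: (term_cong a hz) => t [b [ep ec]].
exists (((pickle (a, t)).+1, b) :: l); split.
  move=> j; rewrite vecs_cons /= gen_pickle hv in_cons.
  case: (eqVneq j a) => [->|ne] /=.
    by rewrite (negbTE aL) addr0 ep.
  by rewrite mulr0 add0r.
rewrite big_cons vals_cons /=; exact: congD.
Qed.

Lemma pi_out z ss j : @QpX p X z -> covers p z ss -> j \notin ss ++ F -> pi z j = 0.
Proof.
move=> hz cz; rewrite mem_cat negb_or => /andP [js jF].
have zj : in_Zp p (z j).
  by case: (pselect (in_Zp p (z j))) => H; [exact: H | have := cz j H; rewrite (negbTE js)].
by rewrite /pi /nj (negbTE jF) zj.2.
Qed.

Lemma pairing_vals z : @QpX p X z -> exists l, eqv (vecs l) (pi z) /\ cong 1 (pairing p z eta) (vals Ffin l).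
Proof.
move=> hz; case: (QpX_seq hz) => ss cs.
have c1 : covers p z (ss ++ F) by apply: covers_cat.
have c2 : covers p eta (ss ++ F) by apply: covers_catr; exact: eta_covers.
rewrite (pairing_seq hp hz eta_QpX c1 c2).
case: (@sum_cong z (undup (ss ++ F)) hz (undup_uniq _)) => l [hv hc].
exists l; split.
  apply: eqv_ext => j; rewrite hv mem_undup; case: ifP => // /negbT h.
  by rewrite (pi_out hz cs h).
apply: cong_trans hc; exact: rmod1_cong.
Qed.

Lemma eta_perp s : S s -> pairing p s eta = 0.
Proof.
move=> Ss; have hs := hSQ Ss.
case: (pairing_vals hs) => l [hv hc].
have hi := Cinf (h := pi s) (ex_intro _ s (conj Ss (eqv_refl _))) hv.
have [a b] := pairing_range p s eta.
apply: (@cong_eq 1 _ 0 ltr01 a b (lexx (0:rat)) ltr01).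
apply: cong_trans hc _; by rewrite cong1_int subr0.
Qed.

Lemma eta_xi : pairing p xi eta <> 0.
Proof.
move=> e0; case: (pairing_vals hxi) => l [hv hc].
have hz : eqv (vecs ((0%N, -1) :: l)) (@fzero X).
  move=> j; have := hv j; rewrite vecs_cons /= /fzero.
  rewrite /cong subr0 => h.
  have -> : ((-1)%:~R * gen 0 j + vecs l j) / P (nj j) = (vecs l j - pi xi j) / P (nj j).
    by rewrite /gen /=; congr (_ / _); rewrite intrN mulN1r addrC.
  exact: h.
have := Cinf Hset0 hz; rewrite vals_cons /= Ffin0 => h.
have hv0 : vals Ffin l \is a Num.int.
  by move: hc; rewrite e0 cong1_int sub0r rpredN.
have hinv : (d0%:R : rat)^-1 \is a Num.int.
  have -> : (d0%:R : rat)^-1 = - ((-1)%:~R * (d0%:R)^-1 + vals Ffin l) + vals Ffin l.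
    by rewrite intrN; ring.
  by apply: rpredD => //; rewrite rpredN.
have d0pos : (0 : rat) < d0%:R by rewrite ltr0n ltnW.
have : (d0%:R : rat)^-1 = 0.
  apply: (@cong_eq 1 _ 0 ltr01 _ _ (lexx (0:rat)) ltr01).
  - by rewrite invr_ge0 ltW.
  - by rewrite invf_lt1 // ltr1n.
  - by rewrite cong1_int subr0.
by apply/eqP; rewrite invr_eq0 gt_eqF.
Qed.

End Build.

Lemma ST_main : exists eta, [/\ @QpX p X eta, forall s, S s -> pairing p s eta = 0
   & pairing p xi eta <> 0].
Proof.
case: base_exists => d0 [hd0 hd0T].
exists (eta d0); split.
- exact: eta_QpX.
- move=> s Ss; exact: eta_perp.
- exact: eta_xi.
Qed.

End ST.

End Part6.

Section Part7.
Set Implicit Arguments. Unset Strict Implicit. Unset Printing Implicit Defensive.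
Import Order.TTheory GRing.Theory Num.Theory.
Local Open Scope classical_set_scope.
Local Open Scope ring_scope.

Section Final.
Variable p : nat.
Hypothesis hp : prime p.
Variable X : countType.

Lemma qp0_valid : is_qp p qp0.
Proof.
move=> k; rewrite /qp0; split.
- by exists 0%N; rewrite mulr0 rpred0.
- exact: lexx.
- exact: (P_gt0 hp).
- by rewrite subrr mul0r rpred0.
Qed.

Lemma QpX_vzero : @QpX p X (@vzero X).
Proof.
split; first by move=> i; exact: qp0_valid.
apply: (@sub_finite_set _ _ [set` [::]]); last exact: finite_seq.
by move=> i /= h; exfalso; apply: h; split; [exact: qp0_valid | done].
Qed.

Lemma vaddC (w w' : X -> qp_raw) : vadd p w w' = vadd p w' w.
Proof. by apply/funext => i; apply/funext => k; rewrite /vadd /qp_add addrC. Qed.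

Lemma sep (S C : set (X -> qp_raw)) xi :
  S `<=` @QpX p X -> S (@vzero X) ->
  (forall s t, S s -> S t -> exists u, S u /\ forall j k, cong (p ^ k)%:R (u j k) (s j k + t j k)) ->
  S `<=` C -> tau_closed p C -> @QpX p X xi -> ~ C xi ->
  exists eta, [/\ @QpX p X eta, forall s, S s -> pairing p s eta = 0 & pairing p xi eta <> 0].
Proof.
move=> SQ S0 Sadd SC [_ [_ hop]] hxi nC.
case: (QpX_seq hxi) => Pl cP.
have hY : Ybox p Pl xi.
  split; first by move=> i; exact: QpX_valid.
  move=> j jP; case: (pselect (in_Zp p (xi j))) => H; first exact: H.2.
  by have := cP j H; rewrite (negbTE jP).
case: (hop Pl xi hY) => [|F [n hFn]]; first by split => //; split.
apply: (ST_main hp SQ S0 Sadd hxi hY (F := F) (n := n)).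
move=> z hz agree Sz.
have [[_ nCz] _] := hFn z hz agree.
by apply: nCz; apply: SC.
Qed.

Lemma sub_add (K : set (X -> qp_raw)) : is_Zp_submodule p K ->
  forall s t, K s -> K t -> exists u, K u /\ forall j k, cong (p ^ k)%:R (u j k) (s j k + t j k).
Proof.
move=> [_ _ Kadd _] s t Ks Kt; exists (vadd p s t); split; first exact: Kadd.
move=> j k; exact: qp_add_cong.
Qed.

Lemma perpperp (K : set (X -> qp_raw)) : is_Zp_submodule p K -> tau_closed p K ->
  K = perp p (perp p K).
Proof.
move=> hK hKc; have [KQ K0 _ _] := hK.
apply/seteqP; split.
  move=> k Kk; split; first exact: KQ.
  by move=> eta [_ h]; rewrite pairingC; exact: h.
move=> xi [hxi hpp]; apply: contrapT => nK.
case: (sep KQ K0 (sub_add hK) (@subset_refl _ K) hKc hxi nK) => eta [hE hs hne].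
apply: hne; apply: hpp; split => // k Kk.
by rewrite pairingC; exact: hs.
Qed.

Lemma perp_vadd (K : set (X -> qp_raw)) a c : K `<=` @QpX p X ->
  perp p K a -> perp p K c -> perp p K (vadd p a c).
Proof.
move=> KQ [ha ea] [hc ec]; split; first exact: QpX_vadd.
move=> k Kk; rewrite pairingC; apply: (pairing_add0 hp) => //; first exact: KQ.
  by rewrite pairingC; exact: ea.
by rewrite pairingC; exact: ec.
Qed.

Lemma perp_vzero (K : set (X -> qp_raw)) : perp p K (@vzero X).
Proof.
split; first exact: QpX_vzero.
by move=> k _; rewrite pairingC pairing_vzero.
Qed.

Lemma msum_perp_add (K L : set (X -> qp_raw)) : K `<=` @QpX p X -> L `<=` @QpX p X ->
  forall s t, msum p (perp p K) (perp p L) s -> msum p (perp p K) (perp p L) t ->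
  exists u, msum p (perp p K) (perp p L) u /\ forall j k, cong (p ^ k)%:R (u j k) (s j k + t j k).
Proof.
move=> KQ LQ s t [a [b [pa pb ->]]] [c [d [pc pd ->]]].
exists (vadd p (vadd p a c) (vadd p b d)); split.
  by exists (vadd p a c), (vadd p b d); split => //; exact: perp_vadd.
move=> j k.
rewrite /vadd.
have H1 := qp_add_cong hp (qp_add p (a j) (c j)) (qp_add p (b j) (d j)) k.
have H2 := qp_add_cong hp (a j) (c j) k.
have H3 := qp_add_cong hp (b j) (d j) k.
have H4 := qp_add_cong hp (a j) (b j) k.
have H5 := qp_add_cong hp (c j) (d j) k.
apply: cong_trans H1 _; apply: cong_trans (congD H2 H3) _.
apply: cong_sym; apply: cong_trans (congD H4 H5) _.
by rewrite addrACA; exact: cong_refl.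
Qed.

End Final.

End Part7.

Unset Implicit Arguments. Set Strict Implicit.
Import Order.TTheory GRing.Theory Num.Theory.
Local Open Scope classical_set_scope.

Theorem lemma2p8 (p : nat) (X : countType) (K L : set (X -> qp_raw)) :
  prime p ->
  is_Zp_submodule p K -> tau_closed p K ->
  is_Zp_submodule p L -> tau_closed p L ->
  [/\ K = perp p (perp p K),
      (K `<=` L -> perp p L `<=` perp p K),
      perp p (msum p K L) = perp p K `&` perp p L
    & perp p (K `&` L) = tau_closure p (msum p (perp p K) (perp p L))].
Proof.
move=> hp hK hKc hL hLc.
have [KQ K0 Kadd _] := hK; have [LQ L0 Ladd _] := hL.
split.
- exact: perpperp.
- by move=> KL xi [hxi h]; split => // k Kk; apply: h; apply: KL.
- apply/seteqP; split.
    move=> xi [hxi h]; split; split => //.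
      move=> k Kk; rewrite -(vadd0 hp (KQ _ Kk)); apply: h.
      by exists k, (@vzero X); split.
    move=> l Ll.
    have e : vadd p (@vzero X) l = l by rewrite vaddC (vadd0 hp (LQ _ Ll)).
    by rewrite -e; apply: h; exists (@vzero X), l; split.
  move=> xi [[hxi hk] [_ hl]]; split => // z [a [b [Ka Lb ->]]].
  by apply: (pairing_add0 hp) => //; [exact: KQ | exact: LQ | exact: hk | exact: hl].
- have KLQ : K `&` L `<=` @QpX p X by move=> z [/KQ].
  apply/seteqP; split; last first.
    move=> z [hz hcl]; apply: hcl; first exact: perp_closed.
    move=> w [a [b [[ha ea] [hb eb] ->]]]; split; first exact: QpX_vadd.
    move=> k [Kk Lk]; rewrite pairingC; apply: (pairing_add0 hp) => //; first exact: KQ.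
      by rewrite pairingC; exact: ea.
    by rewrite pairingC; exact: eb.
  move=> xi [hxi h]; split => // C hC sub.
  apply: contrapT => nC.
  set S := msum p (perp p K) (perp p L).
  have SQ : S `<=` @QpX p X.
    by move=> w [a [b [[ha _] [hb _] ->]]]; exact: QpX_vadd.
  have S0 : S (@vzero X).
    exists (@vzero X), (@vzero X); split; try exact: perp_vzero.
    by rewrite vadd0 //; exact: QpX_vzero.
  have Sadd := msum_perp_add hp KQ LQ.
  case: (sep hp SQ S0 Sadd sub hC hxi nC) => eta [hE hs hne].
  apply: hne; apply: h; split.
    rewrite (perpperp hp hK hKc); split => // a pa.
    rewrite pairingC; apply: hs; exists a, (@vzero X); split => //; first exact: perp_vzero.
    by rewrite vadd0 //; case: pa.
  rewrite (perpperp hp hL hLc); split => // b pb.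
  rewrite pairingC; apply: hs; exists (@vzero X), b; split => //; first exact: perp_vzero.
  by rewrite vaddC vadd0 //; case: pb.
Qed.
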